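(* Let $\mathbf d$ be a graphical degree sequence and let $k$ be an integer with $\underline{\mu}(\mathbf d)\le k\le\overline{\mu}(\mathbf d)$. Then there is a graph $G$ realizing $\mathbf d$ with $\mu(G)=k$.
   Context: All graphs are finite and simple. For a graph $G=(V,E)$ on $n$ vertices, a fractional vertex cover is a function $f:V\to[0,\infty)$ with $f(u)+f(v)\ge 1$ for every edge $uv\in E$; $\tau^*(G)$ denotes the minimum of $\sum_{v\in V}f(v)$ over all fractional vertex covers. For $E'\subseteq E$ let $G-E'=(V,E\setminus E')$. Define $\mu(G)=\min\{|E'| : E'\subseteq E,\ \tau^*(G-E')<n/2\}$. A sequence $(d_1,\dots,d_n)$ is graphical if some simple graph on $\{v_1,\dots,v_n\}$ has $d(v_i)=d_i$ for all $i$ (such a graph realizes it). $\underline{\mu}(\mathbf d)$ and $\overline{\mu}(\mathbf d)$ are the minimum and maximum of $\mu(G)$ over all graphs $G$ realizing $\mathbf d$. *)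

(* Defs.v *)
From HB Require Import structures.
From mathcomp Require Import all_boot all_order all_algebra.
From mathcomp Require Import boolp classical_sets reals.
Set Implicit Arguments. Unset Strict Implicit. Unset Printing Implicit Defensive.
Import Order.TTheory GRing.Theory Num.Theory.

Definition simple_graph (n : nat) (E : {set {set 'I_n}}) : bool :=
  [forall e in E, #|e| == 2].

Definition deg (n : nat) (E : {set {set 'I_n}}) (v : 'I_n) : nat :=
  #|[set e in E | v \in e]|.

Definition realizes (n : nat) (d : 'I_n -> nat) (E : {set {set 'I_n}}) : bool :=
  simple_graph E && [forall v, deg E v == d v].

Definition graphical (n : nat) (d : 'I_n -> nat) : Prop :=
  exists E : {set {set 'I_n}}, realizes d E.

Local Open Scope ring_scope.
Local Open Scope classical_set_scope.

Definition frac_cover (R : realType) (n : nat) (E : {set {set 'I_n}})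
  (f : 'I_n -> R) : Prop :=
  (forall v, 0 <= f v) /\
  (forall u v : 'I_n, u != v -> (u |: [set v])%SET \in E -> 1 <= f u + f v).

(* tau^*(G): the minimum (= infimum, which is attained) of the total weight
   of fractional vertex covers *)
Definition tau_star (R : realType) (n : nat) (E : {set {set 'I_n}}) : R :=
  inf [set x : R | exists f : 'I_n -> R, frac_cover E f /\ x = \sum_(i < n) f i].

(* mu(G) = min { |E'| : E' subset of E, tau^*(G - E') < n/2 }.
   The default value #|E| of the min is harmless whenever the range is
   nonempty (always the case for n >= 1). *)
Definition mu (R : realType) (n : nat) (E : {set {set 'I_n}}) : nat :=
  \big[minn/#|E|]_(E' : {set {set 'I_n}} |
      (E' \subset E) && (tau_star R (E :\: E') < n%:R / 2)) #|E'|.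

Definition mu_up (R : realType) (n : nat) (d : 'I_n -> nat) : nat :=
  \max_(E : {set {set 'I_n}} | realizes d E) mu R E.

(* underline mu(d): minimum of mu(G) over realizations of d.  The default
   value mu_up d of the min is harmless (it is attained when d is graphical). *)
Definition mu_low (R : realType) (n : nat) (d : 'I_n -> nat) : nat :=
  \big[minn/mu_up R d]_(E : {set {set 'I_n}} | realizes d E) mu R E.

(* Main.v *)
Require Import Defs.
From mathcomp Require Import all_boot all_order all_algebra.
From mathcomp Require Import boolp classical_sets reals.
From mathcomp Require Import lra zify.
From mathcomp Require Import fintype finset.
Set Implicit Arguments. Unset Strict Implicit. Unset Printing Implicit Defensive.
Import Order.TTheory GRing.Theory Num.Theory.

Section G.
Variable n : nat.
Implicit Types (E H : {set {set 'I_n}}) (x y z w u v : 'I_n).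

Definition swap E x y z w :=
  (E :\: [set [set x; y]; [set z; w]]) :|: [set [set x; z]; [set y; w]].

Definition step E E' := exists x y z w, [/\ uniq [:: x; y; z; w],
  [set x; y] \in E, [set z; w] \in E, [set x; z] \notin E & [set y; w] \notin E]
  /\ E' = swap E x y z w.

Lemma uniq4 x y z w : uniq [:: x; y; z; w] ->
  [/\ x != y, x != z & x != w] /\ [/\ y != z, y != w & z != w].
Proof.
by rewrite /= !inE !negb_or => /and4P[/and3P[? ? ?] /andP[? ?] ? _].
Qed.

Lemma pair_eqI u v x z : u != v -> [set u; v] = [set x; z] ->
  (u = x /\ v = z) \/ (u = z /\ v = x).
Proof.
move=> uv e.
have : u \in [set x; z] by rewrite -e !inE eqxx.
have : v \in [set x; z] by rewrite -e !inE eqxx orbT.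
have : x \in [set u; v] by rewrite e !inE eqxx.
rewrite !inE => _ /orP[/eqP vx|/eqP vz] /orP[/eqP ux|/eqP uz].
- by rewrite ux vx eqxx in uv.
- by right.
- by left.
- by rewrite uz vz eqxx in uv.
Qed.

Lemma pair_neq x y z w : x != z -> x != w -> [set x; y] != [set z; w].
Proof.
move=> xz xw; apply/eqP => e.
have : x \in [set z; w] by rewrite -e !inE eqxx.
by rewrite !inE (negbTE xz) (negbTE xw).
Qed.

Lemma pair_neq2 x y z w : y != z -> y != w -> [set x; y] != [set z; w].
Proof.
move=> xz xw; apply/eqP => e.
have : y \in [set z; w] by rewrite -e !inE eqxx orbT.
by rewrite !inE (negbTE xz) (negbTE xw).
Qed.

Lemma step_sym E E' : step E E' -> step E' E.
Proof.
move=> [x [y [z [w [[U a b c e] ->]]]]].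
have [[xy xz xw] [yz yw zw]] := uniq4 U.
have ab : [set x; y] != [set z; w] by apply: pair_neq.
have ac : [set x; y] != [set x; z] by apply: pair_neq2; rewrite // eq_sym.
have ae : [set x; y] != [set y; w] by apply: pair_neq; rewrite // eq_sym.
have bc : [set z; w] != [set x; z] by apply: pair_neq2; rewrite // eq_sym.
have be : [set z; w] != [set y; w] by apply: pair_neq; rewrite // eq_sym.
have ce : [set x; z] != [set y; w] by apply: pair_neq.
exists x, z, y, w; split; first split.
  rewrite /= !inE !negb_or xz xy xw /= (eq_sym z y) yz zw yw //.
  by rewrite /swap !inE eqxx orbT.
  by rewrite /swap !inE eqxx !orbT.
  by rewrite /swap !inE eqxx (negbTE ab) (negbTE ac) (negbTE ae).
  by rewrite /swap !inE eqxx ?orbT /= (negbTE bc) (negbTE be).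
apply/setP => S; rewrite /swap !inE.
have [->|Sa] := eqVneq S [set x; y]; first by rewrite a orbT.
have [->|Sb] := eqVneq S [set z; w]; first by rewrite b !orbT.
have [->|Sc] := eqVneq S [set x; z]; first by rewrite (negbTE c).
have [->|Se] := eqVneq S [set y; w]; first by rewrite (negbTE e).
by rewrite /= ?orbF ?andbT.
Qed.

Definition nb E v w : bool := [set v; w] \in E.

Lemma card_sum (T : finType) (P : pred T) : #|[set e | P e]| = \sum_e (P e : nat).
Proof.
rewrite -sum1_card big_mkcond /=; apply: eq_bigr => e _; rewrite inE.
by case: (P e).
Qed.

Lemma simple_nb E v : simple_graph E -> nb E v v = false.
Proof.
move=> /forall_inP sE; apply/negP => /sE.
by rewrite /nb setUid cards1.
Qed.

Lemma nbC E v w : nb E v w = nb E w v.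
Proof. by rewrite /nb setUC. Qed.

Lemma deg_nb E v : simple_graph E -> deg E v = \sum_w nb E v w.
Proof.
move=> sE; rewrite /deg -card_sum.
have -> : [set e in E | v \in e] = (fun w => [set v; w]) @: [set w | nb E v w].
  apply/setP => e; rewrite !inE; apply/andP/imsetP.
    move=> [eE ve]; move/forall_inP: sE => /(_ e eE) /cards2P [a [b [ab ed]]].
    move: ve; rewrite ed !inE => /orP[]/eqP->.
      by exists b; rewrite // inE /nb -ed.
    by exists a; [rewrite inE /nb setUC -ed | rewrite setUC].
  by move=> [w]; rewrite inE /nb => wE ->; rewrite wE !inE eqxx.
apply: card_in_imset => w1 w2; rewrite !inE => h1 h2 e.
have : w1 \in [set v; w2] by rewrite -e !inE eqxx orbT.
rewrite !inE => /orP[/eqP w1v|/eqP //].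
by move: h1; rewrite w1v simple_nb.
Qed.
Lemma four_distinct x y z w : uniq [:: x; y; z; w] ->
  uniq [:: [set x; y]; [set z; w]; [set x; z]; [set y; w]].
Proof.
move=> U; have [[xy xz xw] [yz yw zw]] := uniq4 U.
have ab : [set x; y] != [set z; w] by apply: pair_neq.
have ac : [set x; y] != [set x; z] by apply: pair_neq2; rewrite // eq_sym.
have ae : [set x; y] != [set y; w] by apply: pair_neq; rewrite // eq_sym.
have bc : [set z; w] != [set x; z] by apply: pair_neq2; rewrite // eq_sym.
have be : [set z; w] != [set y; w] by apply: pair_neq; rewrite // eq_sym.
have ce : [set x; z] != [set y; w] by apply: pair_neq.
by rewrite /= !inE !negb_or ab ac ae bc be ce.
Qed.

Lemma arith4 (p q r t m : nat) : r + (t + (m + (p + q))) = p + (q + (m + (r + t))).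
Proof. lia. Qed.

Lemma sum_swap E a b c e (F : {set 'I_n} -> nat) : uniq [:: a; b; c; e] ->
  a \in E -> b \in E -> c \notin E -> e \notin E ->
  \sum_(S in (E :\: [set a; b]) :|: [set c; e]) F S + (F a + F b) =
  \sum_(S in E) F S + (F c + F e).
Proof.
rewrite /= !inE !negb_or => /and4P[/and3P[ab ac ae] /andP[bc be] ce _] aE bE cE eE.
rewrite (bigD1 a aE) (bigD1 b) /=; last by apply/andP; split; [exact: bE | rewrite eq_sym].
rewrite (bigD1 c) /=; last by rewrite !inE eqxx orbT.
rewrite (bigD1 e) /=; last by rewrite !inE eqxx !orbT eq_sym ce.
rewrite -!addnA.
set X := (X in _ + (_ + (X + _)) = _).
set Y := (Y in _ = _ + (_ + (Y + _))).
suff XY : X = Y by rewrite XY; exact: (arith4 (F a) (F b) (F c) (F e) Y).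
rewrite /X /Y.
have ba : b != a by rewrite eq_sym.
have ca : c != a by rewrite eq_sym.
have ea : e != a by rewrite eq_sym.
have cb : c != b by rewrite eq_sym.
have eb : e != b by rewrite eq_sym.
have ec : e != c by rewrite eq_sym.
apply: eq_bigl => S; rewrite !inE.
have [->|Sa] := eqVneq S a; first by rewrite ?eqxx ?(negbTE ab) ?(negbTE ac) ?(negbTE ae) /= ?andbF ?andbT.
have [->|Sb] := eqVneq S b; first by rewrite ?eqxx ?(negbTE ba) ?(negbTE bc) ?(negbTE be) /= ?andbF ?andbT.
have [->|Sc] := eqVneq S c; first by rewrite ?eqxx ?(negbTE ca) ?(negbTE cb) ?(negbTE ce) ?(negbTE cE) /= ?andbF ?andbT; apply/esym/negbTE.
have [->|Se] := eqVneq S e; first by rewrite ?eqxx ?(negbTE ea) ?(negbTE eb) ?(negbTE ec) ?(negbTE eE) /= ?andbF ?andbT; apply/esym/negbTE.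
by rewrite /= ?andbT ?orbF.
Qed.

Lemma deg_sum E v : deg E v = \sum_(S in E) (v \in S : nat).
Proof.
rewrite /deg -sum1_card.
rewrite (eq_bigl (fun S => (S \in E) && (v \in S))); last by move=> S; rewrite inE.
rewrite big_mkcondr /=; apply: eq_bigr => S _; by case: (v \in S).
Qed.

Lemma in_pair v x y : x != y -> (v \in [set x; y] : nat) = (v == x) + (v == y).
Proof.
move=> xy; rewrite !inE; have [->|vx] := eqVneq v x; first by rewrite (negbTE xy).
by case: (v == y).
Qed.

Lemma step_realizes (d : 'I_n -> nat) E E' : realizes d E -> step E E' -> realizes d E'.
Proof.
move=> /andP[sE /forallP dE] [x [y [z [w [[U a b c e] ->]]]]].
have [[xy xz xw] [yz yw zw]] := uniq4 U.
have U2 := four_distinct U.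
apply/andP; split.
  apply/forall_inP => S; rewrite /swap !inE => /orP[/andP[_ SE]|/orP[]/eqP->].
  - by move/forall_inP: sE => /(_ S SE).
  - by rewrite cards2 xz.
  - by rewrite cards2 yw.
apply/forallP => v; rewrite -(eqP (dE v)); apply/eqP.
have := sum_swap (fun S => (v \in S : nat)) U2 a b c e.
rewrite -!deg_sum (in_pair v xy) (in_pair v zw) (in_pair v xz) (in_pair v yw) -/(swap E x y z w).
move: (deg (swap E x y z w) v) (deg E v) (nat_of_bool (v == x)) (nat_of_bool (v == y)) (nat_of_bool (v == z)) (nat_of_bool (v == w)) => A B p q r t.
by rewrite [p + r + _]addnACA => /addIn.
Qed.
Definition Phi E H := \sum_(S : {set 'I_n}) ((S \in E) != (S \in H) : nat).

Lemma PhiC E H : Phi E H = Phi H E.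
Proof. by apply: eq_bigr => S _; rewrite eq_sym. Qed.

Lemma sum_eq1 (a : {set 'I_n}) : \sum_(S : {set 'I_n}) (S == a : nat) = 1.
Proof.
rewrite (bigD1 a) //= eqxx big1 // => S /negbTE -> //.
Qed.

Lemma pw_bool (sa sb sc se sB sO bO eO : bool) :
  (sa -> sB) -> (sa -> ~~ sO) -> (sb -> sB) -> (sc -> ~~ sB) -> (sc -> sO) ->
  (se -> ~~ sB) -> (sb -> sO = bO) -> (se -> sO = eO) ->
  (sa -> ~~ sb) -> (sa -> ~~ sc) -> (sa -> ~~ se) -> (sb -> ~~ sc) ->
  (sb -> ~~ se) -> (sc -> ~~ se) -> (~~ bO) || eO ->
  ((((~~ (sa || sb)) && sB) || (sc || se)) != sO : nat) + sa + sc <=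
  (sB != sO : nat) + (if bO then sb else se).
Proof.
by case: sa; case: sb; case: sc; case: se; case: sB; case: sO; case: bO; case: eO => //= h1 h2 h3 h4 h5 h6 h7 h8 h9 h10 h11 h12 h13 h14 h15;
  repeat match goal with H : is_true true -> _ |- _ => move: (H isT) => {H} H end; try discriminate; auto.
Qed.

Lemma swap_phi (B O : {set {set 'I_n}}) (a b c e : {set 'I_n}) : uniq [:: a; b; c; e] ->
  a \in B -> b \in B -> c \notin B -> e \notin B -> a \notin O -> c \in O ->
  (b \notin O) || (e \in O) ->
  Phi ((B :\: [set a; b]) :|: [set c; e]) O < Phi B O.
Proof.
rewrite /= !inE !negb_or => /and4P[/and3P[ab ac ae] /andP[bc be] ce _] aB bB cB eB aO cO h.
pose t := if b \in O then b else e.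
have pw : forall S, ((S \in (B :\: [set a; b]) :|: [set c; e]) != (S \in O) : nat)
   + (S == a) + (S == c) <= ((S \in B) != (S \in O) : nat) + (S == t).
  move=> S; rewrite !inE.
  have -> : (S == t) = if b \in O then S == b else S == e by rewrite /t; case: (b \in O).
  apply: (@pw_bool _ _ _ _ _ _ (b \in O) (e \in O)); try exact: h; by move/eqP->.
have := @leq_sum _ (index_enum _) xpredT _ _ (fun S _ => pw S).
rewrite !big_split /= !sum_eq1 -/(Phi _ O) -/(Phi B O).
move: (Phi _ O) (Phi B O) => p q h1; clear -h1; lia.
Qed.
Lemma bool_case1 (gz gy hz hy : bool) : hz + gy < gz + hy -> gz && ~~ gy -> ~~ hz || hy.
Proof. by case: gz; case: gy; case: hz; case: hy. Qed.

Lemma bool_case2 (gz gy hz hy : bool) : hz + gy < gz + hy -> ~~ (gz && ~~ gy) ->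
  [/\ hy, ~~ hz & ~~ gy || gz].
Proof. by case: gz; case: gy; case: hz; case: hy. Qed.

Lemma count_contra (a b c e L R : nat) : a = e -> c = b -> L <= R ->
  false + false + a + false + false + b + L = true + true + c + false + false + e + R -> False.
Proof. move=> -> -> ? /=; lia. Qed.

Lemma exists_switch_core (d : 'I_n -> nat) E H S : realizes d E -> realizes d H ->
  S \in E -> S \notin H ->
  (exists E', step E E' /\ Phi E' H < Phi E H) \/ (exists H', step H H' /\ Phi H' E < Phi H E).
Proof.
move=> /andP[sE /forallP dE] /andP[sH /forallP dH] SE SH.
have degeq v : \sum_w nb E v w = \sum_w nb H v w.
  by rewrite -!deg_nb // (eqP (dE v)) (eqP (dH v)).
move/forall_inP: (sE) => /(_ S SE) /cards2P [x [y [xy Sxy]]].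
have gxy : nb E x y by rewrite /nb -Sxy.
have hxy : nb H x y = false by apply/negbTE; rewrite /nb -Sxy.
have [z /andP[hxz gxz] | none] := pickP (fun z => nb H x z && ~~ nb E x z); last first.
  exfalso; move: (degeq x); rewrite (bigD1 y) // [in RHS](bigD1 y) // gxy hxy.
  have : \sum_(i | i != y) nb H x i <= \sum_(i | i != y) nb E x i.
    apply: leq_sum => i _; move: (none i); case: (nb H x i); case: (nb E x i) => //.
  move: (\sum_(i | i != y) nb H x i) (\sum_(i | i != y) nb E x i) => p q h1 h2.
  clear -h1 h2; simpl in h2; lia.
have xz : x != z by apply: contraTneq hxz => <-; rewrite simple_nb.
have yz : y != z by apply: contraTneq gxy => ->; rewrite (negbTE gxz).
have gxz' := negbTE gxz.
have [w /andP[/and3P[wx wy wz] ineq] | none] :=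
  pickP (fun w => [&& w != x, w != y & w != z] && (nb H z w + nb E y w < nb E z w + nb H y w)); last first.
  exfalso.
  have eqs : \sum_w (nb E z w + nb H y w) = \sum_w (nb H z w + nb E y w).
    by rewrite !big_split /= degeq -(degeq y).
  have yx' : true && (y != x) by rewrite eq_sym.
  have zxy : true && (z != x) && (z != y) by rewrite eq_sym xz eq_sym yz.
  move: eqs; rewrite (bigD1 x) // (bigD1 y yx') (bigD1 z zxy).
  rewrite [in RHS](bigD1 x) // [in RHS](bigD1 y yx') [in RHS](bigD1 z zxy) /=.
  rewrite !(nbC _ z x) !(nbC _ y x) gxz' hxy hxz gxy !simple_nb //.
  rewrite !addnA.
  apply: count_contra; [by rewrite nbC | by rewrite nbC |].
  apply: leq_sum => i /andP[/andP[ix iy] iz].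
  by move: (none i); rewrite /= ix iy iz /= => /negbT; rewrite -leqNgt.
have U : uniq [:: x; y; z; w].
  by rewrite /= !inE !negb_or xy xz eq_sym wx yz eq_sym wy eq_sym wz.
have [[_ _ xw] [_ yw zw]] := uniq4 U.
have [c1|c2] := boolP (nb E z w && ~~ nb E y w).
  left; exists (swap E x y z w); split.
    exists x, y, z, w; split => //.
    by case/andP: c1 => ? ?.
  have := bool_case1 ineq c1; case/andP: c1 => gzw gyw h.
  by apply: swap_phi => //; [exact: four_distinct | rewrite /nb in hxy; rewrite hxy].
have [hyw hzw h] := bool_case2 ineq c2.
have U' : uniq [:: x; z; y; w].
  by rewrite /= !inE !negb_or xz xy xw eq_sym yz zw yw.
right; exists (swap H x z y w); split.
  exists x, z, y, w; split => //.
  by rewrite /nb in hxy; rewrite hxy.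
apply: swap_phi => //; first exact: four_distinct U'.
by rewrite /nb in hxy; rewrite hxy.
Qed.
Lemma exists_switch (d : 'I_n -> nat) E H : realizes d E -> realizes d H -> E != H ->
  (exists E', step E E' /\ Phi E' H < Phi E H) \/ (exists H', step H H' /\ Phi E H' < Phi E H).
Proof.
move=> rE rH EH.
have [/eqP ED|[S]] := set_0Vmem (E :\: H).
  have [/eqP HD|[S]] := set_0Vmem (H :\: E).
    by move: EH; rewrite eqEsubset -!setD_eq0 ED HD.
  rewrite inE => /andP[SE SH].
  case: (exists_switch_core rH rE SH SE) => [[H' [st lt]]|[E' [st lt]]].
    by right; exists H'; rewrite !(PhiC E).
  by left; exists E'.
rewrite inE => /andP[SH SE].
case: (exists_switch_core rE rH SE SH) => [[E' [st lt]]|[H' [st lt]]].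
  by left; exists E'.
by right; exists H'; rewrite !(PhiC E).
Qed.
End G.

Lemma bigmin_le (I : finType) (P : pred I) (F : I -> nat) x j : P j ->
  (\big[minn/x]_(i | P i) F i <= F j)%N.
Proof.
move=> Pj; have : j \in index_enum I by rewrite mem_index_enum.
elim: (index_enum I) => [|a r IH] //; rewrite in_cons big_cons => /orP[/eqP <-|jr].
  by rewrite Pj geq_minl.
case: (P a); last exact: IH.
by rewrite (leq_trans (geq_minr _ _)) // IH.
Qed.

Lemma bigmin_ind (I : finType) (P : pred I) (F : I -> nat) x (K : nat -> Prop) :
  K x -> (forall i, P i -> K (F i)) -> K (\big[minn/x]_(i | P i) F i).
Proof.
move=> Kx KF; apply: big_ind => // a b Ka Kb.
by rewrite /minn; case: ltnP.
Qed.

Section Tau.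
Variable R : realType.
Local Open Scope ring_scope.
Local Open Scope classical_set_scope.

Lemma tau_le n (E : {set {set 'I_n}}) f : frac_cover E f -> tau_star R E <= \sum_(i < n) f i.
Proof.
move=> fc; rewrite /tau_star.
have lb : has_lbound [set x : R | exists f : 'I_n -> R, frac_cover E f /\ x = \sum_(i < n) f i].
  exists 0 => y [g [[g0 _] ->]]; exact: sumr_ge0.
by apply: (ge_inf lb); exists f.
Qed.

Lemma tau_lt n (E : {set {set 'I_n}}) t : tau_star R E < t ->
  exists f, frac_cover E f /\ \sum_(i < n) f i < t.
Proof.
move=> /inf_lt [].
  exists (\sum_(i < n) (fun=> 1 : R) i); exists (fun=> 1); split=> //; split=> // u v _ _.
  by rewrite ler_wpDr.
by move=> y [f [fc ->]] lt; exists f.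
Qed.
End Tau.

Section Mu.
Variable R : realType.
Local Open Scope ring_scope.

Lemma tau_mono n (F1 F2 : {set {set 'I_n}}) : F1 \subset F2 -> tau_star R F1 <= tau_star R F2.
Proof.
move=> sub; rewrite {2}/tau_star; apply: lb_le_inf.
  exists (\sum_(i < n) (fun=> 1 : R) i); exists (fun=> 1); split=> //; split=> // u v _ _.
  by rewrite ler_wpDr.
move=> t [f [[f0 fc] ->]]; apply: tau_le; split=> // u v uv uvF.
by apply: fc => //; move/fintype.subsetP: sub; apply.
Qed.

Lemma cover_ext n (F F' : {set {set 'I_n}}) (f : 'I_n -> R) (p q : 'I_n) :
  frac_cover F f -> (forall S, S \in F' -> S \in F \/ S = [set p; q]) ->
  1 <= f p + f q -> frac_cover F' f.
Proof.
move=> [f0 fc] sub pq; split=> // u v uv /sub [] h; first exact: fc.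
by case: (pair_eqI uv h) => [[-> ->]|[-> ->]] //; rewrite addrC.
Qed.

Lemma mu_witness n (E : {set {set 'I_n}}) : (0 < n)%N ->
  exists E0 : {set {set 'I_n}}, [/\ E0 \subset E, tau_star R (E :\: E0) < n%:R / 2 & mu R E = #|E0|].
Proof.
move=> n0; rewrite /mu.
apply: (bigmin_ind (K := fun v => exists E0 : {set {set 'I_n}}, [/\ E0 \subset E, tau_star R (E :\: E0) < n%:R / 2 & v = #|E0|])).
  exists E; split => //; rewrite setDv.
  apply: (le_lt_trans (tau_le (f := fun=> 0) _)).
    by split=> // u v _; rewrite in_set0.
  by rewrite big1 // divr_gt0 // ltr0n.
by move=> E0 /andP[h1 h2]; exists E0.
Qed.

Lemma mu_le n (E E1 : {set {set 'I_n}}) : E1 \subset E -> tau_star R (E :\: E1) < n%:R / 2 ->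
  (mu R E <= #|E1|)%N.
Proof. by move=> h1 h2; rewrite /mu; apply: bigmin_le; rewrite h1 h2. Qed.

Lemma mu_step n (E E' : {set {set 'I_n}}) : step E E' -> (mu R E' <= (mu R E).+1)%N.
Proof.
move=> [x [y [z [w [[U a b c e] ->]]]]].
have n0 : (0 < n)%N by apply: leq_ltn_trans (ltn_ord x).
have [[xy xz xw] [yz yw zw]] := uniq4 U.
have U2 := four_distinct U.
have [E0 [sub0 tau0 ->]] := mu_witness E n0.
set A := [set [set x; y]; [set z; w]].
set C := [set [set x; z]; [set y; w]].
have inS S : (S \in swap E x y z w) = ((S \notin A) && (S \in E)) || (S \in C).
  by rewrite /swap !inE.
have [dis|ndis] := eqVneq (E0 :&: A) set0.
  have [f [fc fs]] := tau_lt tau0.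
  have E0A S : S \in E0 -> S \notin A.
    by move=> SE0; apply/negP => SA; move: dis => /setP /(_ S); rewrite !inE SE0 /=; move: SA; rewrite !inE => ->.
  have aE0 : [set x; y] \in E :\: E0.
    by rewrite inE a andbT; apply: (contraL (E0A _)); rewrite !inE eqxx.
  have bE0 : [set z; w] \in E :\: E0.
    by rewrite inE b andbT; apply: (contraL (E0A _)); rewrite !inE eqxx orbT.
  have fxy := fc.2 _ _ xy aE0.
  have fzw := fc.2 _ _ zw bE0.
  have E0sub : E0 \subset swap E x y z w.
    apply/fintype.subsetP => S SE0; rewrite inS E0A //=.
    by move/fintype.subsetP: sub0 => /(_ S SE0) ->.
  have [h|h] := lerP 1 (f y + f w).
    apply: (@leq_trans #|[set x; z] |: E0|); last by rewrite cardsU1; case: (_ \notin _).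
    apply: mu_le.
      by rewrite subUset sub1set E0sub inS !inE eqxx orbT.
    apply: le_lt_trans fs; apply: tau_le; apply: (cover_ext fc) h => S.
    rewrite in_setD in_setU1 inS !inE => /andP[/norP[SC SE0]] /orP[/andP[SA SE]|/orP[]/eqP SC'].
    - by left; rewrite SE0 SE.
    - by rewrite SC' eqxx in SC.
    - by right.
  apply: (@leq_trans #|[set y; w] |: E0|); last by rewrite cardsU1; case: (_ \notin _).
  apply: mu_le.
    by rewrite subUset sub1set E0sub inS !inE eqxx !orbT.
  have h' : 1 <= f x + f z by lra.
  apply: le_lt_trans fs; apply: tau_le; apply: (cover_ext fc) h' => S.
  rewrite in_setD in_setU1 inS !inE => /andP[/norP[SC SE0]] /orP[/andP[SA SE]|/orP[]/eqP SC'].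
  - by left; rewrite SE0 SE.
  - by right.
  - by rewrite SC' eqxx in SC.
set E1 := (E0 :\: A) :|: C.
apply: (@leq_trans #|E1|).
  apply: mu_le.
    apply/fintype.subsetP => S; rewrite /E1 inS !inE => /orP[/andP[SA SE0]|SC].
      by rewrite SA /=; move/fintype.subsetP: sub0 => /(_ S SE0) ->.
    by rewrite SC orbT.
  apply: le_lt_trans tau0; apply: tau_mono.
  apply/fintype.subsetP => S; rewrite in_setD inS /E1 in_setU in_setD.
  move=> /andP[/norP[h1 SC] /orP[/andP[SA SE]|SC']]; last by rewrite SC' in SC.
  by rewrite in_setD SE andbT; move: h1; rewrite SA.
rewrite /E1 (leq_trans (leq_card_setU _ _)) //.
have cC : (#|C| <= 2)%N by rewrite /C cards2; case: (_ != _).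
have := cardsID A E0.
have : (0 < #|E0 :&: A|)%N by rewrite card_gt0.
move: #|E0 :&: A| #|E0 :\: A| #|C| cC => p q r cC' p0 eq.
rewrite -eq; clear -cC' p0; lia.
Qed.
End Mu.

Lemma between_step (a b c k : nat) : (a <= b.+1)%N -> (b <= a.+1)%N -> k != a ->
  (minn a c <= k <= maxn a c)%N -> (minn b c <= k <= maxn b c)%N.
Proof. move=> h1 h2 /eqP h3 /andP[h4 h5]; apply/andP; split; lia. Qed.

Lemma ivt (R : realType) n (d : 'I_n -> nat) k : forall m (E H : {set {set 'I_n}}),
  (Phi E H < m)%N -> realizes d E -> realizes d H ->
  (minn (mu R E) (mu R H) <= k <= maxn (mu R E) (mu R H))%N ->
  exists G, realizes d G /\ mu R G = k.
Proof.
elim=> [//|m IH] E H lt rE rH kb.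
have [eEH|nEH] := eqVneq E H.
  by exists E; split => //; move: kb; rewrite eEH minnn maxnn => /andP[h1 h2]; apply/eqP; rewrite eqn_leq h1 h2.
have [kE|kE] := eqVneq k (mu R E); first by exists E.
case: (exists_switch rE rH nEH) => [[E' [st lt']]|[H' [st lt']]].
  apply: (IH E' H) => //.
  - by apply: leq_trans lt' _; rewrite -ltnS.
  - exact: step_realizes st.
  apply: between_step kE kb; [exact: mu_step (step_sym st) | exact: mu_step st].
have [kH|kH] := eqVneq k (mu R H); first by exists H.
apply: (IH E H') => //.
- by apply: leq_trans lt' _; rewrite -ltnS.
- exact: step_realizes st.
rewrite minnC maxnC; rewrite minnC maxnC in kb.
apply: between_step kH kb; [exact: mu_step (step_sym st) | exact: mu_step st].
Qed.

Theorem theorem13 (R : realType) (n : nat) (d : 'I_n -> nat) (k : nat) :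
  graphical d ->
  (mu_low R d <= k <= mu_up R d)%N ->
  exists E : {set {set 'I_n}}, realizes d E /\ mu R E = k.
Proof.
move=> [E0 rE0] kb.
have [Eh rEh hEh] : exists2 Eh, realizes d Eh & mu_up R d = mu R Eh.
  rewrite /mu_up (bigop.bigmax_eq_arg E0) //; case: fintype.arg_maxnP => // i Pi _; by exists i.
have [El rEl hEl] : exists2 El, realizes d El & mu_low R d = mu R El.
  rewrite /mu_low; apply: (bigmin_ind (K := fun v => exists2 El, realizes d El & v = mu R El)); first by exists Eh.
  by move=> i Pi; exists i.
apply: (@ivt R n d k (Phi El Eh).+1 El Eh) => //.
have le : (mu R El <= mu R Eh)%N by rewrite -hEl -hEh; case/andP: kb => h1 h2; exact: leq_trans h2.
by rewrite (minn_idPl le) (maxn_idPr le) -hEl -hEh.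
Qed.
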